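(* For any positive integers $k,\Delta$ with $3 \le k\le \Delta$ and any positive integers $x_1,\dots,x_k$ with $1\le x_j \le \Delta$, $$ \frac2{\Delta-1} \sum_{1\le i<j \le k} \frac1{x_i+x_j+2k-4} \le \sum_{j=1}^k \frac1{x_j+k} \le \frac{\Delta+3}{4} \sum_{1\le i<j \le k} \frac1{x_i+x_j+2k-4} \, . $$ *)

(* Defs.v *)
From mathcomp Require Import all_boot all_order all_algebra.
Set Implicit Arguments. Unset Strict Implicit. Unset Printing Implicit Defensive.

(* Main.v *)
Require Import Defs.
From mathcomp Require Import all_boot all_order all_algebra.
From mathcomp Require Import ring lra zify.
Import Order.TTheory GRing.Theory Num.Theory.
Local Open Scope ring_scope.
Definition fu (c a b : rat) := c * a * b - 4 * (a+b)^+2 + 16 * (a+b).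

Lemma corners (p q : nat) :
  let kk := (q+3)%:R : rat in let d := kk + p%:R in let c := (d+3) * (kk-1) in
  let m := kk+1 in let M := d + kk in
  0 <= fu c m m /\ 0 <= fu c M m /\ 0 <= fu c M M.
Proof.
move=> kk d c m M; rewrite /fu /M /m /c /d /kk.
split; [|split].
- rewrite (_ : _ - _ + _ = (64 + 128 * q + 76 * q^2 + 16 * q^3 + q^4 + 32 * p + 32 * p * q + 10 * p * q^2 + p * q^3)%N%:R); first by rewrite ler0n.
  rewrite !natrD !natrM; ring.
- rewrite (_ : _ - _ + _ = (48 + 168 * q + 124 * q^2 + 30 * q^3 + 2 * q^4 + 32 * p + 72 * p * q + 30 * p * q^2 + 3 * p * q^3 + 4 * p^2 + 6 * p^2 * q + p^2 * q^2)%N%:R); first by rewrite ler0n.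
  rewrite !natrD !natrM; ring.
- rewrite (_ : _ - _ + _ = (48 + 256 * q + 212 * q^2 + 56 * q^3 + 4 * q^4 + 56 * p + 164 * p * q + 76 * p * q^2 + 8 * p * q^3 + 20 * p^2 + 28 * p^2 * q + 5 * p^2 * q^2 + 2 * p^3 + p^3 * q)%N%:R); first by rewrite ler0n.
  rewrite !natrD !natrM; ring.
Qed.
Lemma up_pair (p q : nat) (a b : rat) :
  let kk := (q+3)%:R : rat in let d := kk + p%:R in
  kk + 1 <= a <= d + kk -> kk + 1 <= b <= d + kk ->
  (kk - 1)^-1 * (a^-1 + b^-1) <= ((d + 3) / 4) * (a + b - 4)^-1.
Proof.
move=> kk d /andP[ha1 ha2] /andP[hb1 hb2].
have hk : 3 <= kk by rewrite /kk natrD ler_wpDl.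
have hp : 0 <= p%:R :> rat by [].
have [c00 [cM0 cMM]] := corners p q.
set c := (d + 3) * (kk - 1).
set m := kk + 1. set M := d + kk.
have hL : 0 < M - m by rewrite /M /m /d; lra.
have key : (M - m)^+2 * fu c a b = fu c m m * ((M - a) * (M - b)) +
   fu c M m * ((a - m) * (M - b) + (M - a) * (b - m)) + fu c M M * ((a - m) * (b - m))
   + 4 * (M - m)^+2 * ((a - m) * (M - a) + (b - m) * (M - b)).
  by rewrite /fu; ring.
have f0 : 0 <= fu c a b.
  have : 0 <= (M - m)^+2 * fu c a b.
    rewrite key; rewrite /m /M in ha1 ha2 hb1 hb2 *.
    apply: addr_ge0; [apply: addr_ge0; [apply: addr_ge0|]|].
    - apply: mulr_ge0 => //; apply: mulr_ge0; lra.
    - apply: mulr_ge0 => //; apply: addr_ge0; apply: mulr_ge0; lra.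
    - apply: mulr_ge0 => //; apply: mulr_ge0; lra.
    - apply: mulr_ge0; first by apply: mulr_ge0 => //; apply: exprn_ge0; lra.
      apply: addr_ge0; apply: mulr_ge0; lra.
  by rewrite pmulr_rge0 // exprn_gt0.
have e : (d + 3) / 4 * (a + b - 4)^-1 - (kk - 1)^-1 * (a^-1 + b^-1)
   = fu c a b / (4 * (kk - 1) * a * b * (a + b - 4)).
  rewrite /fu /c; field.
  rewrite /m /M in ha1 hb1.
  apply/and4P; split; apply/negP => /eqP; lra.
rewrite -subr_ge0 e; apply: divr_ge0 => //.
rewrite /m in ha1 hb1.
apply: mulr_ge0; [apply: mulr_ge0; [apply: mulr_ge0; [apply: mulr_ge0|]|]|]; lra.
Qed.

Lemma low_pair (k D : rat) (a b : rat) :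
  3 <= k -> k <= D ->
  k + 1 <= a -> k + 1 <= b ->
  (2 / (D - 1)) * (a + b - 4)^-1 <= (k - 1)^-1 * (a^-1 + b^-1).
Proof.
move=> hk hkD ha hb.
have e : (k - 1)^-1 * (a^-1 + b^-1) - (2 / (D - 1)) * (a + b - 4)^-1
   = ((D - 1) * (a + b) * (a + b - 4) - 2 * (k - 1) * a * b) / ((k - 1) * (D - 1) * a * b * (a + b - 4)).
  field.
  apply/and5P; split; apply/negP => /eqP; lra.
rewrite -subr_ge0 e; apply: divr_ge0.
  have h1 : 0 <= (D - k) * ((a + b) * (a + b - 4)) by apply: mulr_ge0; nra.
  have h2 : 0 <= (k - 1) * ((a - b)^+2) by apply: mulr_ge0; [lra| apply: sqr_ge0].
  have h3 : 0 <= (k - 1) * ((a + b) * (a + b - 8)) by apply: mulr_ge0; nra.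
  nra.
apply: mulr_ge0; [apply: mulr_ge0; [apply: mulr_ge0; [apply: mulr_ge0|]|]|]; lra.
Qed.

Lemma pair_sum k (h : 'I_k -> rat) :
  \sum_(i < k) \sum_(j < k | (i < j)%N) (h i + h j) = (k%:R - 1) * \sum_(i < k) h i.
Proof.
under eq_bigr do rewrite big_split /=.
rewrite big_split /=.
rewrite [X in _ + X](exchange_big_dep xpredT) //=.
rewrite -big_split /= mulr_sumr; apply: eq_bigr => i _.
rewrite (big_mkcond (fun j : 'I_k => (i < j)%N)) (big_mkcond (fun j : 'I_k => (j < i)%N)) -big_split /=.
rewrite (bigD1 i) //= ltnn add0r.
rewrite (eq_bigr (fun=> h i)); last first.
  move=> j ji; case: ltngtP => //= e; rewrite ?addr0 ?add0r //.
  by move: ji; rewrite (val_inj e) eqxx.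
have e2 : \sum_(j < k) h i = h i + \sum_(j < k | j != i) h i by rewrite (bigD1 i).
move: e2; rewrite sumr_const card_ord => e2.
have -> : \sum_(j < k | j != i) h i = h i *+ k - h i by rewrite e2 addrC addKr.
by rewrite mulrBl mul1r mulr_natl.
Qed.
Theorem corollary3p4 (k Delta : nat) (x : 'I_k -> nat) :
  (3 <= k)%N -> (k <= Delta)%N ->
  (forall j, 1 <= x j <= Delta)%N ->
  let S := \sum_(i < k) \sum_(j < k | (i < j)%N)
             ((x i + x j + 2 * k - 4)%:R : rat)^-1 in
  let T := \sum_(j < k) ((x j + k)%:R : rat)^-1 in
  (2 / (Delta%:R - 1)) * S <= T /\ T <= ((Delta%:R + 3) / 4) * S.
Proof.
move=> hk hkD hx S T.
set p := (Delta - k)%N. set q := (k - 3)%N.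
have ek : k%:R = (q + 3)%:R :> rat by rewrite /q subnK.
have eD : Delta%:R = (q + 3)%:R + p%:R :> rat by rewrite -natrD /p /q; congr (_%:R); lia.
have eg : forall i j, ((x i + x j + 2 * k - 4)%:R : rat) = (x i + k)%:R + (x j + k)%:R - 4.
  move=> i j; have H : (x i + x j + 2 * k - 4 + 4 = (x i + k) + (x j + k))%N.
    by have := hx i; have := hx j; lia.
  by apply/eqP; rewrite eq_sym subr_eq -natrD -H natrD.
have hb : forall j, k%:R + 1 <= ((x j + k)%:R : rat) <= Delta%:R + k%:R.
  move=> j; have /andP[h1 h2] := hx j.
  have r1 : 1 <= (x j)%:R :> rat by rewrite ler1n.
  have r2 : (x j)%:R <= Delta%:R :> rat by rewrite ler_nat.
  rewrite natrD; apply/andP; split; lra.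
have k3 : 3 <= k%:R :> rat by rewrite (ler_nat _ 3 k).
have kD : k%:R <= Delta%:R :> rat by rewrite ler_nat.
have k1 : k%:R - 1 != 0 :> rat by apply/negP => /eqP; lra.
have PS := @pair_sum k (fun j => ((x j + k)%:R : rat)^-1).
split.
- rewrite /S mulr_sumr.
  apply: (@le_trans _ _ (\sum_(i < k) \sum_(j < k | (i < j)%N) (k%:R - 1)^-1 *
         (((x i + k)%:R : rat)^-1 + ((x j + k)%:R)^-1))).
    apply: ler_sum => i _; rewrite mulr_sumr; apply: ler_sum => j _; rewrite eg.
    have /andP[? ?] := hb i; have /andP[? ?] := hb j.
    by apply: low_pair.
  under eq_bigr do rewrite -mulr_sumr.
  by rewrite -mulr_sumr PS mulrA mulVf // mul1r.
- rewrite /S mulr_sumr.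
  apply: (@le_trans _ _ (\sum_(i < k) \sum_(j < k | (i < j)%N) (k%:R - 1)^-1 *
         (((x i + k)%:R : rat)^-1 + ((x j + k)%:R)^-1))); last first.
    apply: ler_sum => i _; rewrite mulr_sumr; apply: ler_sum => j _; rewrite eg.
    have hi := hb i; have hj := hb j.
    rewrite ek eD in hi hj *.
    exact: (@up_pair p q _ _ hi hj).
  under eq_bigr do rewrite -mulr_sumr.
  by rewrite -mulr_sumr PS mulrA mulVf // mul1r.
Qed.
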